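(* Fix $m\in\mathbb{Z}^+$ and $r\in\mathbb{N}$. Let $\mathsf{st}\colon X\to \mathbb{Z}$ be a function on a finite set $X$. If $$\sum_{x\in X:\ \mathsf{st}(x)\equiv l \pmod{2m}}\binom{\mathsf{st}(x)}{j}=\sum_{x\in X:\ \mathsf{st}(x)\equiv l+m \pmod{2m}}\binom{\mathsf{st}(x)}{j}$$ for every $l\in \mathbb{Z}_m$ and every $0\le j\le r-1$, then $\sum_{x\in X}q^{\mathsf{st}(x)}\in (1+q^m)^r\mathbb{Z}[q]$.
   Context: $\mathbb{Z}_m$ denotes the residues $\{0,1,\dots,m-1\}$. *)

(* Defs.v *)
From mathcomp Require Import all_boot all_order all_algebra.
Set Implicit Arguments. Unset Strict Implicit. Unset Printing Implicit Defensive.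
Import Order.TTheory GRing.Theory Num.Theory.
Local Open Scope ring_scope.

(* Generalized binomial coefficient binom(n, j) = n(n-1)...(n-j+1)/j! for an
   integer upper argument n (possibly negative); values are integers, we
   compute them in rat. *)
Definition binomz (n : int) (j : nat) : rat :=
  (\prod_(i < j) (n - i%:Z)%:~R) / (j`!)%:R.

(* f(q) = sum_x q^(st x) is a Laurent polynomial in general; membership in
   (1+q^m)^r Z[q] (extended to Laurent polynomials: (1+q^m)^r Z[q,q^-1]) is
   expressed after shifting by q^N so that all exponents are >= 0. *)
Definition laurent_in_ideal (X : finType) (st : X -> int) (m r : nat) : Prop :=
  exists (N : nat) (p : {poly int}),
    (forall x, 0 <= st x + N%:Z) /\
    \sum_(x : X) 'X^(absz (st x + N%:Z)) = (1 + 'X^m) ^+ r * p.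

(* Main.v *)
Require Import Defs.
From mathcomp Require Import all_boot all_order all_algebra.
From mathcomp Require Import ring lra zify.
Import Order.TTheory GRing.Theory Num.Theory.
Local Open Scope ring_scope.

Lemma binomz0 n : binomz n 0 = 1.
Proof. by rewrite /binomz big_ord0 fact0 divr1. Qed.

Lemma binomzS (n : int) j : binomz (n + 1) j.+1 = binomz n j.+1 + binomz n j.
Proof.
rewrite /binomz big_ord_recl big_ord_recr /=.
have -> : \prod_(i < j) ((n + 1 - (bump 0 i)%:Z)%:~R : rat) = \prod_(i < j) (n - i%:Z)%:~R.
  by apply: eq_bigr => i _; congr (_ %:~R); rewrite /bump /= add1n -addn1 PoszD; ring.
set P := \prod_(i < j) _.
rewrite factS natrM.
have hj : (j`!)%:R != 0 :> rat by rewrite pnatr_eq0 -lt0n fact_gt0.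
have hj1 : (j.+1)%:R != 0 :> rat by rewrite pnatr_eq0.
rewrite -[j.+1]addn1 natrD. rewrite intrD intrB !intrD /=.
rewrite oppr0 -!pmulrn. field. by rewrite hj natr1.
Qed.

Lemma binomz_nat (n : nat) j : binomz n%:Z j = ('C(n, j))%:R.
Proof.
elim: n j => [|n IH] [|j]; rewrite ?binomz0 ?bin0 //.
  rewrite /binomz big_ord_recl /= subr0 mul0r mul0r bin0n //.
rewrite -[n.+1]addn1 PoszD binomzS !IH addn1 binS natrD //.
Qed.
Lemma sum_binomz0 (X : finType) (P : pred X) (f : X -> int) :
  \sum_(x | P x) binomz (f x) 0 = \sum_(x | P x) 1.
Proof. by apply: eq_bigr => x _; apply: binomz0. Qed.

Lemma shift_hyp (X : finType) (st : X -> int) (A B : pred X) r :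
  (forall j, (j < r)%N -> \sum_(x | A x) binomz (st x) j = \sum_(x | B x) binomz (st x) j) ->
  forall k : nat, forall j, (j < r)%N ->
   \sum_(x | A x) binomz (st x + k%:Z) j = \sum_(x | B x) binomz (st x + k%:Z) j.
Proof.
move=> H; elim=> [|k IH] j hj.
  have E x : binomz (st x + 0%N%:Z) j = binomz (st x) j by rewrite -[Posz 0]/(0:int) addr0.
  rewrite (eq_bigr _ (fun x _ => E x)) (eq_bigr (fun x => binomz (st x) j) (fun x _ => E x)); exact: H.
case: j hj => [|j] hj.
  by have := IH 0 hj; rewrite !sum_binomz0.
have E x : binomz (st x + k.+1%:Z) j.+1 = binomz (st x + k%:Z) j.+1 + binomz (st x + k%:Z) j.
  by rewrite -binomzS -addn1 PoszD addrA.
under eq_bigr do rewrite E; under [RHS]eq_bigr do rewrite E.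
rewrite !big_split /= IH // IH //; exact: ltnW.
Qed.

Lemma taylor_nat (B n : nat) : (n < B)%N ->
  'X^n = \sum_(j < B) (('C(n, j))%:Z)%:P * ('X - 1 : {poly int})^+j.
Proof.
move=> hB.
have -> : ('X^n : {poly int}) = (('X - 1) + 1)^+n by rewrite subrK.
rewrite exprD1n (big_ord_widen B (fun i => ('X - 1 : {poly int}) ^+ i *+ 'C(n, i))) //.
rewrite big_mkcond /=; apply: eq_bigr => i _.
case: ifP => hi.
  by rewrite -mulr_natl -natz polyC_natr.
by rewrite bin_small ?mul0r // leqNgt hi.
Qed.

Lemma taylor_div (X : finType) (A : pred X) (c : X -> int) (e : X -> nat) r :
  (forall j, (j < r)%N -> \sum_(x | A x) c x * ('C(e x, j))%:Z = 0) ->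
  exists D : {poly int}, \sum_(x | A x) (c x)%:P * 'X^(e x) = ('X - 1)^+r * D.
Proof.
move=> H.
set B := (\max_x e x).+1.
pose a j := \sum_(x | A x) c x * ('C(e x, j))%:Z.
have E : \sum_(x | A x) (c x)%:P * 'X^(e x) = \sum_(j < B) (a j)%:P * ('X - 1)^+j.
  under eq_bigr => x _ do rewrite (@taylor_nat B (e x)) ?ltnS ?leq_bigmax // mulr_sumr.
  rewrite exchange_big /=; apply: eq_bigr => j _.
  rewrite /a rmorph_sum /= mulr_suml; apply: eq_bigr => x _.
  by rewrite mulrA -polyCM.
exists (\sum_(j < B) (a j)%:P * ('X - 1)^+(j - r)).
rewrite E mulr_sumr; apply: eq_bigr => j _.
case: (ltnP j r) => hj.
  by rewrite /a H // polyC0 !mul0r mulr0.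
rewrite mulrCA -exprD subnKC //.
Qed.
Lemma compXn (q : {poly int}) n : 'X^n \Po q = q ^+ n.
Proof. by rewrite rmorphXn /= comp_polyX. Qed.

Lemma class_div (X : finType) (A : pred X) (e : X -> nat) (m l r : nat) :
  (0 < m)%N -> (forall x, A x -> e x %% m = l)%N ->
  (exists D : {poly int}, \sum_(x | A x) ((-1) ^+ (e x %/ m))%:P * 'X^(e x) = ('X - 1)^+r * D) ->
  exists Q : {poly int}, \sum_(x | A x) 'X^(e x) = (1 + 'X^m)^+r * Q.
Proof.
move=> m0 hA [D HD].
set H := \sum_(x | A x) 'X^(e x %/ m) : {poly int}.
have ee x : A x -> e x = (l + m * (e x %/ m))%N.
  by move=> Ax; rewrite -(hA x Ax) addnC mulnC -divn_eq.
have HS : \sum_(x | A x) 'X^(e x) = 'X^l * (H \Po 'X^m).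
  rewrite rmorph_sum /= mulr_sumr; apply: eq_bigr => x Ax.
  by rewrite compXn -exprM -exprD -ee.
have HK : \sum_(x | A x) ((-1) ^+ (e x %/ m))%:P * 'X^(e x) = 'X^l * (H \Po (- 'X^m)).
  rewrite rmorph_sum /= mulr_sumr; apply: eq_bigr => x Ax.
  rewrite compXn [in RHS]exprNn -exprM rmorphXn rmorphN1 /=.
  by rewrite mulrCA -exprD -ee.
suff [Q HQ] : exists Q, H = (1 + 'X)^+r * Q.
  exists ('X^l * (Q \Po 'X^m)).
  rewrite HS HQ rmorphM rmorphXn rmorphD /= comp_polyX comp_polyC polyC1.
  by rewrite mulrCA.
have [s [R hR EH]] := multiplicity_XsubC H (-1).
case: (eqVneq H 0) => [H0|Hn0]; first by exists 0; rewrite H0 mulr0.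
rewrite Hn0 /= in hR.
rewrite polyCN opprK polyC1 in EH.
suff rs : (r <= s)%N.
  exists (R * ('X + 1)^+(s - r)); rewrite EH -(subnKC rs) exprD addrC.
  by rewrite subnKC // mulrCA.
rewrite leqNgt; apply/negP => lt.
pose S := \sum_(i < m) ('X : {poly int}) ^+ (m.-1 - i) * 1 ^+ i.
have HX : ('X + 1) \Po (- 'X^m) = ('X - 1) * (- S).
  rewrite rmorphD /= comp_polyX comp_polyC polyC1 mulrN -subrXX expr1n.
  by rewrite opprB addrC.
pose C := 'X^l * (R \Po (- 'X^m)) * (- S)^+s.
have KC : ('X - 1)^+r * D = ('X - 1)^+s * C.
  rewrite -HD HK EH rmorphM rmorphXn /= HX exprMn /C.
  ring.
have S1 : S.[1] = m%:R.
  rewrite /S horner_sum (eq_bigr (fun=> 1)); last first.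
    by move=> i _; rewrite expr1n mulr1 hornerXn expr1n.
  by rewrite sumr_const card_ord.
have C1 : C.[1] != 0.
  rewrite /C !hornerM !horner_exp hornerX hornerN S1 horner_comp hornerN hornerXn !expr1n mul1r.
  rewrite mulf_neq0 // expf_neq0 // oppr_eq0 pnatr_eq0 -lt0n //.
have sC : C = ('X - 1)^+(r - s) * D.
  apply/eqP; rewrite -subr_eq0; apply/eqP.
  have nz : ('X - 1 : {poly int})^+s != 0 by rewrite expf_neq0 // polyXsubC_eq0.
  apply: (mulfI nz); rewrite mulr0 mulrBr [_ * (_ * D)]mulrA -exprD subnKC ?KC ?subrr //; exact: ltnW.
move: C1; rewrite sC hornerM horner_exp hornerD hornerN hornerX hornerC subrr expr0n.
by rewrite subn_eq0 leqNgt lt mul0r eqxx.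
Qed.
Lemma mod2m (e m : nat) : (0 < m)%N ->
  (e %% (2 * m) = odd (e %/ m) * m + e %% m)%N.
Proof.
move=> m0.
have He : e = ((e %/ m)./2 * (2 * m) + (odd (e %/ m) * m + e %% m))%N.
  rewrite {1}(divn_eq e m) -{1}(odd_double_half (e %/ m)) -muln2; ring.
rewrite {1}He modnMDl modn_small //.
have := ltn_pmod e m0; case: (odd _); lia.
Qed.

Lemma modz_class (z : int) (N K m a : nat) : (0 < m)%N -> (a < 2 * m)%N ->
  N = (2 * m * K)%N -> 0 <= z + N%:Z ->
  ((z == a%:Z %[mod (2 * m)%N%:Z])%Z = (absz (z + N%:Z)%R %% (2 * m) == a)%N).
Proof.
move=> m0 ha hN hz.
have -> : (z %% (2 * m)%N%:Z)%Z = ((z + N%:Z) %% (2 * m)%N%:Z)%Z.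
  by rewrite hN (PoszM (2 * m) K) [(Posz (2 * m)) * _]mulrC addrC modzMDl.
rewrite -{1}(gez0_abs hz) !modz_nat (modn_small ha) //.
Qed.

Lemma cls (u l m : nat) (b : bool) : (u < m)%N -> (l < m)%N ->
  ((b * m + u == l)%N = ((u == l) && ~~ b)) /\ ((b * m + u == l + m)%N = ((u == l) && b)).
Proof.
move=> um lm; case: b; rewrite ?mul1n ?mul0n ?add0n ?andbT ?andbF; split => //.
- by apply/eqP; lia.
- by rewrite addnC eqn_add2r.
- by apply/eqP; lia.
Qed.

Theorem proposition4p7 (m r : nat) (X : finType) (st : X -> int) :
  (0 < m)%N ->
  (forall (l : 'I_m) (j : nat), (j < r)%N ->
     \sum_(x : X | (st x == (l : nat)%:Z %[mod (2 * m)%N%:Z])%Z) binomz (st x) j =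
     \sum_(x : X | (st x == (l + m)%N%:Z %[mod (2 * m)%N%:Z])%Z) binomz (st x) j) ->
  laurent_in_ideal st m r.
Proof.
move=> m0 Hyp.
pose K := (\max_x absz (st x))%N.
pose N := (2 * m * K)%N.
have Npos x : 0 <= st x + N%:Z.
  have h1 : (absz (st x) <= K)%N := leq_bigmax (F := fun x => absz (st x)) x.
  have h2 : (K <= N)%N by rewrite /N leq_pmull // muln_gt0 m0.
  lia.
pose e x := absz (st x + N%:Z).
have eE x : (e x)%:Z = st x + N%:Z by rewrite /e gez0_abs.
exists N.
suff [p Hp] : exists p : {poly int}, \sum_x 'X^(e x) = (1 + 'X^m)^+r * p.
  by exists p; split.
rewrite (partition_big (fun x => Ordinal (ltn_pmod (e x) m0)) predT) //=.
apply: (big_ind (fun P => exists p, P = (1 + 'X^m)^+r * p)).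
- by exists 0; rewrite mulr0.
- by move=> a b [pa ->] [pb ->]; exists (pa + pb); rewrite mulrDr.
move=> l _.
rewrite (eq_bigl (fun x => (e x %% m == l)%N)) //.
apply: (@class_div X (fun x => (e x %% m == l)%N) e m l r m0).
  by move=> x /eqP.
apply: taylor_div => j hj.
apply/eqP; rewrite -(intr_eq0 rat); apply/eqP.
rewrite rmorph_sum /=.
under eq_bigr do rewrite intrM intr_sign -signr_odd -pmulrn -binomz_nat eE.
rewrite (bigID (fun x => odd (e x %/ m))) /=.
rewrite (eq_bigr (fun x => - binomz (st x + N%:Z) j)); last first.
  by move=> x /andP [_ ->]; rewrite expr1 mulN1r.
rewrite (eq_bigr (fun x => binomz (st x + N%:Z) j)); last first.
  by move=> x /andP [_ /negbTE ->]; rewrite expr0 mul1r.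
rewrite sumrN.
have hl : (l < m)%N := ltn_ord l.
have eqA x : ((e x %% m == l)%N && ~~ odd (e x %/ m)) =
    (st x == (l : nat)%:Z %[mod (2 * m)%N%:Z])%Z.
  rewrite (@modz_class _ N K m l m0) ?Npos //; last by lia.
  by rewrite -/(e x) mod2m // (@cls _ _ _ (odd (e x %/ m)) (ltn_pmod (e x) m0) hl).1.
have eqB x : ((e x %% m == l)%N && odd (e x %/ m)) =
    (st x == (l + m)%N%:Z %[mod (2 * m)%N%:Z])%Z.
  rewrite (@modz_class _ N K m (l + m) m0) ?Npos //; last by lia.
  by rewrite -/(e x) mod2m // (@cls _ _ _ (odd (e x %/ m)) (ltn_pmod (e x) m0) hl).2.
rewrite (eq_bigl _ _ eqA) (eq_bigl _ _ eqB).
have := @shift_hyp _ st _ _ r (Hyp l) N j hj.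
by move=> ->; rewrite addNr.
Qed.
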